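(* Let $s$ be an integer with $\sqrt{n} \le s \le n$ and let $\sigma$ be a sequence of $n$ integers with $\mathsf{lis}(\sigma) \in O(n/s)$. Then a longest increasing subsequence of $\sigma$ can be found in $O(\frac{1}{s} \cdot n^{2} \log n)$ time using $O(s \log n)$ bits of working space.
   Context: A sequence of integers may contain repetitions; $\mathsf{lis}(\sigma)$ is the length of a longest (strictly) increasing subsequence of $\sigma$. Computational model: RAM with read-only input, write-only output, and space measured in bits of read-write working memory. *)

(* Defs.v *)
From mathcomp Require Import all_boot all_order all_algebra.
Set Implicit Arguments. Unset Strict Implicit. Unset Printing Implicit Defensive.
Import Order.TTheory GRing.Theory Num.Theory.
Local Open Scope ring_scope.

Definition lis (s : seq int) : nat :=
  \max_(m : (size s).-tuple bool)
     (if sorted <%R (mask m s) then size (mask m s) else 0%N).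

(* binary logarithm, rounded so that it is >= 1 *)
Definition lg (n : nat) : nat := (trunc_log 2 n).+1.

(* Registers are indexed by nat; working memory is the list of
   registers r_0 .. r_{k-1} touched so far.
   The input sigma is read-only and accessible only through comparisons
   of its entries; the output is a write-only stream of ints. *)
Inductive instr :=
| IConst of nat & int
| IAdd of nat & nat & nat
| ISub of nat & nat & nat
| IMul of nat & nat & nat
| IDiv of nat & nat & nat      (* r[d] := r[a] div r[b] (floor; 0 if r[b]=0) *)
| ILoad of nat & nat
| IStore of nat & nat
| IJlt of nat & nat & nat
| IJeq of nat & nat & nat
| IJltIn of nat & nat & nat
| IJeqIn of nat & nat & nat
| IOut of nat
| IHalt.

Definition program := seq instr.

Record config := Config { pc : nat; regs : seq int; out : seq int }.

Inductive state := Running of config | Halted of config | Crashed.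

Definition rget (r : seq int) (i : nat) : int := nth 0 r i.

Section Step.
Variables (p : program) (sigma : seq int) (w : nat).

Definition wr (c : config) (d : nat) (v : int) : state :=
  if (`|v| < 2 ^ w)%N
  then Running (Config (pc c).+1 (set_nth 0 (regs c) d v) (out c))
  else Crashed.

Definition addr (v : int) : option nat :=
  if 0 <= v then Some `|v|%N else None.

Definition inidx (v : int) : option nat :=
  if (0 <= v) && (`|v| < size sigma)%N then Some `|v|%N else None.

Definition jump (c : config) (b : bool) (t : nat) : state :=
  Running (Config (if b then t else (pc c).+1) (regs c) (out c)).

Definition step (c : config) : state :=
  let r := rget (regs c) in
  match nth IHalt p (pc c) with
  | IConst d k => wr c d k
  | IAdd d a b => wr c d (r a + r b)
  | ISub d a b => wr c d (r a - r b)
  | IMul d a b => wr c d (r a * r b)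
  | IDiv d a b => wr c d (r a %/ r b)%Z
  | ILoad d a => match addr (r a) with
                 | Some i => wr c d (r i) | None => Crashed end
  | IStore a b => match addr (r a) with
                  | Some i => wr c i (r b) | None => Crashed end
  | IJlt a b t => jump c (r a < r b) t
  | IJeq a b t => jump c (r a == r b) t
  | IJltIn a b t => match inidx (r a), inidx (r b) with
                    | Some i, Some j => jump c (nth 0 sigma i < nth 0 sigma j) t
                    | _, _ => Crashed end
  | IJeqIn a b t => match inidx (r a), inidx (r b) with
                    | Some i, Some j => jump c (nth 0 sigma i == nth 0 sigma j) t
                    | _, _ => Crashed end
  | IOut a => Running (Config (pc c).+1 (regs c) (rcons (out c) (r a)))
  | IHalt => if (pc c < size p)%N then Halted c else Crashed
  end.

Definition step_state (st : state) : state :=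
  match st with Running c => step c | _ => st end.

Definition exec (init : state) (t : nat) : state := iter t step_state init.
End Step.

Definition init_config (n s : nat) : config :=
  Config 0 [:: n%:Z; s%:Z] [::].

(* working space in bits of a configuration: each touched register costs
   its bit length plus one (sign) bit *)
Definition space_cfg (c : config) : nat :=
  \sum_(x <- regs c) (trunc_log 2 `|x|).+2.

Definition space_state (st : state) : nat :=
  match st with Running c | Halted c => space_cfg c | Crashed => 0%N end.

(* the output (read as a list of positions of sigma) is a longest
   increasing subsequence of sigma *)
Definition is_lis_positions (sigma : seq int) (o : seq int) : Prop :=
  all (fun x => 0 <= x) o /\
  let idx := map (fun x : int => `|x|%N) o in
  [/\ sorted ltn idx, all (fun i => i < size sigma)%N idx,
      sorted <%R (map (nth 0 sigma) idx) & size idx = lis sigma].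

Definition finds_lis_within (p : program) (w : nat) (sigma : seq int)
    (s T S : nat) : Prop :=
  exists t c, (t <= T)%N /\
    exec p sigma w (Running (init_config (size sigma) s)) t = Halted c /\
    (is_lis_positions sigma (out c) \/ is_lis_positions sigma (rev (out c))) /\
    (forall t', (t' <= t)%N ->
       (space_state (exec p sigma w (Running (init_config (size sigma) s)) t') <= S)%N).

(* Main.v *)
Require Import Defs.
From mathcomp Require Import all_boot all_order all_algebra zify ring.
Set Implicit Arguments. Unset Strict Implicit. Unset Printing Implicit Defensive.
Import Order.TTheory GRing.Theory Num.Theory.

Section Math.
Variable sg : seq int.
Local Notation n := (size sg).
Definition vl (i : nat) : int := nth 0%R sg i.
Definition gr (a b : nat) : bool := (b < a) && (vl b < vl a)%R.
Definition chain (j k : nat) := exists rest, path gr j rest /\ size rest = k /\ j < n.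

Lemma gr_trans : transitive gr.
Proof. move=> y x z /andP[h1 h2] /andP[h3 h4]; apply/andP; split; [lia | exact: lt_trans h4 h2]. Qed.

Lemma sgE : sg = map vl (iota 0 n).
Proof. by rewrite -[LHS](mkseq_nth 0%R). Qed.

Lemma mask_vl (m : bitseq) : mask m sg = map vl (mask m (iota 0 n)).
Proof. by rewrite map_mask -sgE. Qed.

Lemma mask_idx (idx : seq nat) : sorted ltn idx -> all (fun i => i < n) idx ->
  mask [seq x \in idx | x <- iota 0 n] (iota 0 n) = idx.
Proof.
move=> hs ha; rewrite -filter_mask.
apply: (irr_sorted_eq ltn_trans ltnn) => //.
  by apply: sorted_filter; [exact: ltn_trans| exact: iota_ltn_sorted].
move=> x; rewrite mem_filter mem_iota add0n /=.
case hx: (x \in idx) => //=; by rewrite (allP ha x hx).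
Qed.

Lemma lis_ge (idx : seq nat) : sorted ltn idx -> all (fun i => i < n) idx ->
  sorted <%R (map vl idx) -> size idx <= lis sg.
Proof.
move=> hs ha hv.
set m := [seq x \in idx | x <- iota 0 n].
have szm : size m == n by rewrite size_map size_iota.
rewrite /lis; apply: leq_trans (leq_bigmax (Tuple szm)) => /=.
by rewrite mask_vl mask_idx // hv size_map.
Qed.

Definition lt2 (a b : nat) := gr b a.

Lemma sorted_lt2 (idx : seq nat) : sorted lt2 idx = sorted ltn idx && sorted <%R (map vl idx).
Proof.
rewrite sorted_map; case: idx => //= x s.
by rewrite -path_relI.
Qed.

Lemma chain_lis j k : chain j k -> k < lis sg.
Proof.
case=> rest [hp [<- hj]].
have hs : sorted lt2 (rev (j :: rest)) by rewrite rev_sorted.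
have ha : all (fun i => i < n) (rev (j :: rest)).
  rewrite all_rev /= hj /=; apply/allP => x hx.
  have := allP (order_path_min gr_trans hp) x hx; case/andP => h _; lia.
move: hs; rewrite sorted_lt2 => /andP[h1 h2].
by have := lis_ge h1 ha h2; rewrite size_rev.
Qed.

Lemma lis_le_n : lis sg <= n.
Proof.
apply/bigmax_leqP => t _; case: ifP => // _.
by rewrite size_mask ?size_tuple // -[X in _ <= X](size_tuple t) count_size.
Qed.

Lemma mask_chain (t : bitseq) : size t = n -> sorted <%R (mask t sg) -> 0 < size (mask t sg) ->
  exists e, chain e (size (mask t sg)).-1.
Proof.
move=> hsz hs hp.
set idx := mask t (iota 0 n).
have hmv : mask t sg = map vl idx by rewrite mask_vl.
have h1 : sorted ltn idx by apply: sorted_mask; [exact: ltn_trans| exact: iota_ltn_sorted].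
have ha : all (fun i => i < n) idx.
  apply/allP => x /mem_mask; rewrite mem_iota; lia.
have h2 : sorted lt2 idx by rewrite sorted_lt2 h1 -hmv hs.
move: h2; rewrite -[idx]revK rev_sorted.
rewrite hmv size_map -size_rev in hp *.
have ha' : all (fun i => i < n) (rev idx) by rewrite all_rev.
case: (rev idx) ha' hp => [|e rest] //= /andP[he _] _ hpath.
by exists e; exists rest.
Qed.

Lemma lis_le_chain (N : nat) : (forall e k, chain e k -> k < N) -> lis sg <= N.
Proof.
move=> h; apply/bigmax_leqP => t _; case: ifP => // hs.
case hz: (size (mask t sg)) => [|k] //.
have hp : 0 < size (mask t sg) by rewrite hz.
have [e he] := mask_chain (size_tuple t) hs hp.
by have := h _ _ he; rewrite hz.
Qed.

Lemma lis_attained : 0 < lis sg -> exists e, chain e (lis sg).-1.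
Proof.
move=> hp.
have i0 : n.-tuple bool := [tuple of nseq n false].
move: hp; rewrite /lis (bigop.bigmax_eq_arg i0) //.
set t := [arg max_(i > i0) _]%N.
case: ifP => // hs hp.
exact: mask_chain (size_tuple t) hs hp.
Qed.


Definition PInv i ts := [/\ i <= n, forall l, l < size ts -> nth 0 ts l < i,
  forall l1 l2, l1 < l2 -> l2 < size ts -> (vl (nth 0%N ts l1) < vl (nth 0%N ts l2))%R,
  forall l, l < size ts -> chain (nth 0 ts l) l &
  forall e k, e < i -> chain e k -> k < size ts /\ (vl (nth 0%N ts k) <= vl e)%R].

Definition split ts x c := [/\ c <= size ts, forall l, l < c -> (vl (nth 0%N ts l) < x)%R &
  forall l, c <= l -> l < size ts -> ~~ (vl (nth 0%N ts l) < x)%R].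

Definition Lis_at j c := chain j c /\ forall k, chain j k -> k <= c.

Lemma PInv0 : PInv 0 [::].
Proof. by split. Qed.

Lemma chain_lt j k : chain j k -> j < n.
Proof. by case=> r [_ []]. Qed.

Lemma pat_max i ts c k : PInv i ts -> split ts (vl i) c -> chain i k -> k <= c.
Proof.
case=> hi h1 h2 h3 h4 [hc s1 s2] [[|e' r'] [hp [<- hin]]] //=.
move: hp => /= /andP[/andP[he1 he2] hp].
have [hk hv] := h4 e' (size r') he1 (ex_intro _ r' (conj hp (conj erefl (ltn_trans he1 hin)))).
case: (leqP c (size r')) => // hcr.
have := s2 _ hcr hk; rewrite (le_lt_trans hv he2) //.
Qed.

Lemma pat_step i ts c : PInv i ts -> i < n -> split ts (vl i) c ->
  PInv i.+1 (set_nth 0 ts c i) /\ Lis_at i c.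
Proof.
move=> hP hin hs; have hmax := pat_max hP hs.
case: hP => hi h1 h2 h3 h4; case: hs => hc s1 s2.
have hsz : size (set_nth 0 ts c i) = maxn c.+1 (size ts) by rewrite size_set_nth.
have hnth l : nth 0 (set_nth 0 ts c i) l = if l == c then i else nth 0 ts l.
  by rewrite nth_set_nth.
have hch : chain i c.
  case: c hc s1 s2 hmax {hsz hnth} => [|c] hc s1 s2 hmax.
    by exists [::].
  have [r [hp [hr _]]] := h3 c hc.
  exists (nth 0 ts c :: r); split; last by rewrite /= hr.
  rewrite /= hp andbT /gr; apply/andP; split; [exact: h1 | exact: s1].
split; last by split.
split.
- exact: hin.
- move=> l; rewrite hsz hnth; case: eqP => // hl hlt.
  have : l < size ts by lia.
  by move/h1 => h; apply: ltnW.
- move=> l1 l2 hl hl2; rewrite hsz in hl2; rewrite !hnth.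
  case: eqP => e1; case: eqP => e2; subst.
  + lia.
  + have hcs : c < size ts by lia.
    have := s2 c (leqnn c) hcs; rewrite -leNgt => hx.
    exact: le_lt_trans hx (h2 _ _ hl (ltac:(lia))).
  + exact: s1.
  + by apply: h2 => //; lia.
- move=> l; rewrite hsz hnth; case: eqP => [->|hl] // hlt.
  by apply: h3; lia.
- move=> e k he hek; rewrite hsz hnth.
  case: (ltnP e i) => hei.
    have [hk hv] := h4 e k hei hek; split; first lia.
    case: eqP => [ekc|] //; rewrite ekc in hk hv.
    have := s2 c (leqnn c) (ltac:(lia)); rewrite -leNgt => hx.
    exact: le_trans hx _.
  have ei : e = i by lia.
  subst e.
  have hkc := hmax k hek.
  split; first lia.
  case: eqP => // hkc'.
  by apply: ltW; apply: s1; lia.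
Qed.

Lemma Lis_at_uniq j c1 c2 : Lis_at j c1 -> Lis_at j c2 -> c1 = c2.
Proof. move=> [h1 m1] [h2 m2]; have := m1 _ h2; have := m2 _ h1; lia. Qed.

Lemma pinv_size i ts : PInv i ts -> size ts <= lis sg.
Proof.
case=> _ _ _ h3 _; case hs: (size ts) => [|k] //.
have := chain_lis (h3 k (ltac:(lia))); lia.
Qed.

Lemma pinv_lis ts : PInv n ts -> lis sg = size ts.
Proof.
move=> hP; apply/eqP; rewrite eqn_leq (pinv_size hP) andbT.
apply: lis_le_chain => e k he; case: hP => _ _ _ _ h4.
by case: (h4 e k (chain_lt he) he).
Qed.

Lemma Lis_at_pred b m : Lis_at b m.+1 -> exists j, [/\ j < b, (vl j < vl b)%R & Lis_at j m].
Proof.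
case=> [[[|j r] [hp [hs hb]]] hm] //=.
move: hp => /= /andP[/andP[hj1 hj2] hp].
exists j; split => //; split.
  exists r; split => //; split; [by case: hs | lia].
move=> k [r2 [hp2 [hs2 hj]]].
have : chain b k.+1.
  exists (j :: r2); split; last by rewrite /= hs2.
  by rewrite /= hp2 /gr hj1 hj2.
move/hm; lia.
Qed.

Lemma Lis_at_top : 0 < lis sg -> exists j, Lis_at j (lis sg).-1.
Proof.
move=> hp; have [e he] := lis_attained hp.
exists e; split => // k /chain_lis; lia.
Qed.

End Math.
Definition R0 := 17.
Opaque R0.
Definition prog : program := [::
 IConst 2 (Posz 0); IConst 3 (Posz 1); IConst 4 (Posz 2); IConst 5 (Posz 17);
 IAdd 7 0 2; IAdd 6 2 2;
 (* 6 *) IAdd 8 2 2; IAdd 9 2 2;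
 (* 8 *) IJlt 8 7 10; IJeq 2 2 36;
 (* 10 *) IAdd 10 2 2; IAdd 11 9 2;
 (* 12 *) IJlt 10 11 14; IJeq 2 2 23;
 (* 14 *) IAdd 12 10 11; IDiv 12 12 4; IAdd 13 5 12; ILoad 14 13; IJltIn 14 8 21;
 (* 19 *) IAdd 11 12 2; IJeq 2 2 12;
 (* 21 *) IAdd 10 12 3; IJeq 2 2 12;
 (* 23 *) IAdd 16 10 3; IJeq 16 6 26; IJeq 2 2 30;
 (* 26 *) IJeq 7 0 29; IJltIn 8 7 29; IJeq 2 2 30;
 (* 29 *) IAdd 15 8 2;
 (* 30 *) IAdd 13 5 10; IStore 13 8; IJlt 10 9 34; IAdd 9 9 3;
 (* 34 *) IAdd 8 8 3; IJeq 2 2 8;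
 (* 36 *) IJeq 6 2 41; IOut 15; IAdd 7 15 2; ISub 6 6 3; IJeq 2 2 42;
 (* 41 *) IAdd 6 9 2;
 (* 42 *) IJeq 6 2 44; IJeq 2 2 6;
 (* 44 *) IHalt ].

Lemma all_set_nth T (P : pred T) x0 (s : seq T) k y :
  P x0 -> all P s -> P y -> all P (set_nth x0 s k y).
Proof.
move=> h0; elim: k s => [|k IH] [|a s] /= hs hy.
- by rewrite hy.
- by move: hs => /andP[_ ->]; rewrite hy.
- by rewrite h0 /= -cat_nseq all_cat all_nseq h0 orbT /= hy.

- by move: hs => /andP[-> hs]; rewrite IH.
Qed.

Definition upd (v : nat -> nat) (d x i : nat) := if i == d then x else v i.
Arguments upd v d x i /.

Section Machine.
Variables (sg : seq int) (w Lc B : nat).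
Hypothesis hBw : B < 2 ^ w.
Hypothesis hRL : R0 <= Lc.
Local Notation p := prog.

Definition Good (c : config) :=
  (size (regs c) <= Lc) && all (fun x : int => (`|x| <= B)%N) (regs c).

Definition ex c t := exec p sg w (Running c) t.
Definition run c t c' := ex c t = Running c' /\
  forall t', t' <= t -> exists c'', ex c t' = Running c'' /\ Good c''.
Definition wp c N (Q : config -> Prop) := exists t c', t <= N /\ run c t c' /\ Q c'.

Lemma wp_ret c N (Q : config -> Prop) : Good c -> Q c -> wp c N Q.
Proof.
move=> hg hq; exists 0, c; split => //; split => //; split => // t'; rewrite leqn0 => /eqP ->.
by exists c.
Qed.

Lemma wp_mono c N N' Q : N <= N' -> wp c N Q -> wp c N' Q.
Proof. move=> h [t [c' [ht hr]]]; exists t, c'; split => //; lia. Qed.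

Lemma wp_step c c' N Q : step p sg w c = Running c' -> Good c -> wp c' N Q -> wp c N.+1 Q.
Proof.
move=> hs hg [t [c'' [ht [[he hsp] hq]]]].
exists t.+1, c''; split => //; split => //; split.
  by rewrite /ex /exec iterSr /= hs.
case=> [|t'] h; first by exists c.
have [c3 [h3 h3']] := hsp t' h.
by exists c3; rewrite /ex /exec iterSr /= hs.
Qed.

Lemma exD c c1 t1 t2 : ex c t1 = Running c1 -> ex c (t2 + t1) = ex c1 t2.
Proof. by rewrite /ex /exec iterD => ->. Qed.

Lemma wp_seq c N1 N2 Q1 Q2 : wp c N1 Q1 -> (forall c1, Q1 c1 -> wp c1 N2 Q2) ->
  wp c (N1 + N2) Q2.
Proof.
move=> [t1 [c1 [h1 [[e1 s1] q1]]]] /(_ c1 q1) [t2 [c2 [h2 [[e2 s2] q2]]]].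
exists (t2 + t1), c2; split; first lia.
split => //; split.
  by rewrite (exD _ e1).
move=> t' ht'; case: (leqP t' t1) => h; first exact: s1.
have [c3 [e3 g3]] := s2 (t' - t1) (ltac:(lia)).
exists c3; split => //.
by rewrite -(subnK (ltnW h)) (exD _ e1).
Qed.

Definition Sa pc0 (v : nat -> nat) (ts : seq nat) (o : seq int) (c : config) :=
  [/\ pc c = pc0, forall i, i < R0 -> rget (regs c) i = Posz (v i),
     forall l, l < size ts -> rget (regs c) (R0 + l) = Posz (nth 0 ts l),
     out c = o & Good c].

Definition wpS pc0 v ts o N Q := forall c, Sa pc0 v ts o c -> wp c N Q.

Lemma wpS_nil pc0 v ts o N Q : wpS pc0 v [::] o N Q -> wpS pc0 v ts o N Q.
Proof. by move=> h c [h1 h2 h3 h4 h5]; apply: h; split. Qed.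

Lemma wpS_mono pc0 v ts o N N' Q : N <= N' -> wpS pc0 v ts o N Q -> wpS pc0 v ts o N' Q.
Proof. by move=> hn h c hc; apply: wp_mono hn (h c hc). Qed.

Lemma wpS_ext pc0 v v' ts o N Q : (forall i, i < R0 -> v i = v' i) ->
  wpS pc0 v' ts o N Q -> wpS pc0 v ts o N Q.
Proof.
move=> he h c [h1 h2 h3 h4 h5]; apply: h; split => // i hi.
by rewrite h2 // he.
Qed.

Lemma Sa_bound pc0 v ts o c i : Sa pc0 v ts o c -> i < R0 -> v i <= B.
Proof.
case=> _ h2 _ _ /andP[_ ha] hi; have := h2 i hi; rewrite /rget.
case: (ltnP i (size (regs c))) => hs.
  by move=> e; have := allP ha _ (mem_nth 0%R hs); rewrite e.
by rewrite nth_default // => -[<-].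
Qed.

Lemma Sa_wr pc0 v ts o c d x : Sa pc0 v ts o c -> d < R0 -> x <= B ->
  exists c', wr w c d (Posz x) = Running c' /\ Sa pc0.+1 (upd v d x) ts o c'.
Proof.
case=> h1 h2 h3 h4 /andP[hs ha] hd hx; rewrite /wr /=.
have -> : x < 2 ^ w by lia.
eexists; split; first reflexivity.
split.
- by rewrite /= h1.
- move=> i hi; rewrite /rget nth_set_nth /= /upd; case: eqP => // _; exact: h2.
- move=> l hl; rewrite /rget nth_set_nth /=.
  have -> : (R0 + l == d) = false by apply/eqP; lia.
  exact: h3.
- exact: h4.
- rewrite /Good /= size_set_nth; apply/andP; split; first lia.
  by apply: all_set_nth.
Qed.

Lemma wpS_wr pc0 v ts o N Q c d x : Sa pc0 v ts o c -> d < R0 -> x <= B ->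
  wpS pc0.+1 (upd v d x) ts o N Q ->
  step p sg w c = wr w c d (Posz x) -> wp c N.+1 Q.
Proof.
move=> hc hd hx h hs; have [c' [e hc']] := Sa_wr hc hd hx.
have [_ _ _ _ hg] := hc.
by apply: wp_step hg (h c' hc'); rewrite hs.
Qed.

Lemma wpS_const pc0 d k v ts o N Q :
  nth IHalt p pc0 = IConst d (Posz k) -> d < R0 -> k <= B ->
  wpS pc0.+1 (upd v d k) ts o N Q -> wpS pc0 v ts o N.+1 Q.
Proof.
move=> hi hd hk h c hc; have [hpc h2 h3 _ _] := hc; apply: (wpS_wr hc hd hk h).
by rewrite /step hpc hi.
Qed.

Lemma wpS_add pc0 d a b v ts o N Q :
  nth IHalt p pc0 = IAdd d a b -> d < R0 -> a < R0 -> b < R0 -> v a + v b <= B ->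
  wpS pc0.+1 (upd v d (v a + v b)) ts o N Q -> wpS pc0 v ts o N.+1 Q.
Proof.
move=> hi hd ha hb hk h c hc; have [hpc h2 h3 _ _] := hc; apply: (wpS_wr hc hd hk h).
by rewrite /step hpc hi /= h2 // h2 // PoszD.
Qed.

Lemma wpS_sub pc0 d a b v ts o N Q :
  nth IHalt p pc0 = ISub d a b -> d < R0 -> a < R0 -> b < R0 -> v b <= v a ->
  wpS pc0.+1 (upd v d (v a - v b)) ts o N Q -> wpS pc0 v ts o N.+1 Q.
Proof.
move=> hi hd ha hb hk h c hc.
have hB : v a - v b <= B by have := Sa_bound hc ha; lia.
have [hpc h2 h3 _ _] := hc; apply: (wpS_wr hc hd hB h).
by rewrite /step hpc hi /= h2 // h2 // subzn.
Qed.

Lemma wpS_div pc0 d a b v ts o N Q :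
  nth IHalt p pc0 = IDiv d a b -> d < R0 -> a < R0 -> b < R0 ->
  wpS pc0.+1 (upd v d (v a %/ v b)) ts o N Q -> wpS pc0 v ts o N.+1 Q.
Proof.
move=> hi hd ha hb h c hc.
have hB : v a %/ v b <= B by apply: leq_trans (leq_div _ _) (Sa_bound hc ha).
have [hpc h2 h3 _ _] := hc; apply: (wpS_wr hc hd hB h).
by rewrite /step hpc hi /= h2 // h2 // divz_nat.
Qed.

Lemma wpS_load pc0 d a l v ts o N Q :
  nth IHalt p pc0 = ILoad d a -> d < R0 -> a < R0 -> v a = R0 + l -> l < size ts ->
  nth 0 ts l <= B ->
  wpS pc0.+1 (upd v d (nth 0 ts l)) ts o N Q -> wpS pc0 v ts o N.+1 Q.
Proof.
move=> hi hd ha hva hl hk h c hc; have [hpc h2 h3 _ _] := hc; apply: (wpS_wr hc hd hk h).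
by rewrite /step hpc hi /= h2 // hva /addr /= h3.
Qed.

Lemma wpS_store pc0 a b l v ts o N Q :
  nth IHalt p pc0 = IStore a b -> a < R0 -> b < R0 -> v a = R0 + l -> l <= size ts ->
  R0 + l < Lc -> v b <= B ->
  wpS pc0.+1 v (set_nth 0 ts l (v b)) o N Q -> wpS pc0 v ts o N.+1 Q.
Proof.
move=> hi ha hb hva hl hL hk h c hc.
have [hpc h2 h3 h4 /andP[hs hal]] := hc.
have hst : step p sg w c = wr w c (R0 + l) (Posz (v b)).
  by rewrite /step hpc hi /= h2 // hva /addr /= h2.
have hvb : v b < 2 ^ w by lia.
have hg : Good c by rewrite /Good hs hal.
apply: (wp_step (c' := Config pc0.+1 (set_nth 0%R (regs c) (R0 + l) (Posz (v b))) (out c))) (hg) _.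
  by rewrite hst /wr /= hvb hpc.
apply: h; split.
- by [].
- move=> i hi'; rewrite /rget nth_set_nth /=.
  have -> : (i == R0 + l) = false by apply/eqP; lia.
  exact: h2.
- move=> l' hl'; rewrite /rget nth_set_nth /= nth_set_nth /= eqn_add2l.
  case: eqP => // hne; apply: h3.
  move: hl'; rewrite size_set_nth; lia.
- exact: h4.
- rewrite /Good /= size_set_nth; apply/andP; split; first lia.
  by apply: all_set_nth.
Qed.

Lemma wpS_jump pc0 v ts o N Q c b t : Sa pc0 v ts o c -> step p sg w c = jump c b t ->
  wpS (if b then t else pc0.+1) v ts o N Q -> wp c N.+1 Q.
Proof.
move=> hc hst h; have [hpc h2 h3 h4 hg] := hc.
apply: (wp_step (c' := Config (if b then t else (pc c).+1) (regs c) (out c))) (hg) _.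
  by rewrite hst.
by apply: h; split => //=; rewrite ?hpc.
Qed.

Lemma wpS_jlt pc0 a b t v ts o N Q : nth IHalt p pc0 = IJlt a b t -> a < R0 -> b < R0 ->
  wpS (if v a < v b then t else pc0.+1) v ts o N Q -> wpS pc0 v ts o N.+1 Q.
Proof.
move=> hi ha hb h c hc; have [hpc h2 h3 h4 hg] := hc; apply: (wpS_jump hc _ h).
by rewrite /step hpc hi /= h2 // h2 // ltz_nat.
Qed.

Lemma wpS_jeq pc0 a b t v ts o N Q : nth IHalt p pc0 = IJeq a b t -> a < R0 -> b < R0 ->
  wpS (if v a == v b then t else pc0.+1) v ts o N Q -> wpS pc0 v ts o N.+1 Q.
Proof.
move=> hi ha hb h c hc; have [hpc h2 h3 h4 hg] := hc; apply: (wpS_jump hc _ h).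
by rewrite /step hpc hi /= h2 // h2 // eqz_nat.
Qed.

Lemma inidx_nat x : x < size sg -> inidx sg (Posz x) = Some x.
Proof. by move=> hx; rewrite /inidx /= hx. Qed.

Lemma wpS_jltin pc0 a b t v ts o N Q : nth IHalt p pc0 = IJltIn a b t -> a < R0 -> b < R0 ->
  v a < size sg -> v b < size sg ->
  wpS (if (nth 0%R sg (v a) < nth 0%R sg (v b))%R then t else pc0.+1) v ts o N Q ->
  wpS pc0 v ts o N.+1 Q.
Proof.
move=> hi ha hb hva hvb h c hc; have [hpc h2 h3 h4 hg] := hc; apply: (wpS_jump hc _ h).
by rewrite /step hpc hi /= h2 // h2 // !inidx_nat.
Qed.

Lemma wpS_out pc0 a v ts o N Q : nth IHalt p pc0 = IOut a -> a < R0 ->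
  wpS pc0.+1 v ts (rcons o (Posz (v a))) N Q -> wpS pc0 v ts o N.+1 Q.
Proof.
move=> hi ha h c hc; have [hpc h2 h3 h4 hg] := hc.
apply: (wp_step (c' := Config (pc c).+1 (regs c) (rcons (out c) (Posz (v a))))) (hg) _.
  by rewrite /step hpc hi /= h2.
by apply: h; split => //=; rewrite ?hpc ?h4.
Qed.

Lemma Sa_halt v ts o c : Sa 44 v ts o c -> step p sg w c = Halted c.
Proof. by case=> hpc _ _ _ _; rewrite /step hpc. Qed.


Hypothesis hLc : Lc = R0 + lis sg.
Hypothesis hBv : B = 2 * size sg + 40.
Local Notation n := (size sg).

Lemma hR0 : R0 = 17. Proof. by []. Qed.

Definition Cst (v : nat -> nat) := [/\ v 0 = n, v 2 = 0, v 3 = 1, v 4 = 2 & v 5 = R0].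
Definition frame (S : seq nat) (v v' : nat -> nat) := all (fun i => v' i == v i) S.
Definition Sbs := [:: 0; 1; 2; 3; 4; 5; 6; 7; 8; 9; 15].

Lemma frame_trans S v1 v2 v3 : frame S v1 v2 -> frame S v2 v3 -> frame S v1 v3.
Proof.
move=> /allP h1 /allP h2; apply/allP => i hi.
by rewrite (eqP (h2 i hi)) (eqP (h1 i hi)).
Qed.

Lemma frame_refl S v : frame S v v.
Proof. by apply/allP => i _. Qed.

Lemma frameE S v v' i : frame S v v' -> i \in S -> v' i = v i.
Proof. by move=> /allP h hi; apply/eqP; apply: h. Qed.

Ltac ctr := exfalso; lia.

Lemma bs_loop r : forall v ts o N Q,
  Cst v -> v 8 < n -> v 10 <= v 11 -> v 11 <= size ts -> v 11 - v 10 < 2 ^ r -> size ts <= n ->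
  (forall l, l < size ts -> nth 0 ts l < n) ->
  (forall l1 l2, l1 < l2 -> l2 < size ts -> (vl sg (nth 0%N ts l1) < vl sg (nth 0%N ts l2))%R) ->
  (forall l, l < v 10 -> (vl sg (nth 0%N ts l) < vl sg (v 8))%R) ->
  (forall l, v 11 <= l -> l < size ts -> ~~ (vl sg (nth 0%N ts l) < vl sg (v 8))%R) ->
  (forall v', frame Sbs v v' -> split sg ts (vl sg (v 8)) (v' 10) -> wpS 23 v' ts o N Q) ->
  wpS 12 v ts o (8 * r + 2 + N) Q.
Proof.
have hR := hR0.
elim: r => [|r IH] v ts o N Q hC hj hlh hhs hw hsn hts hsort hL hR' K.
  rewrite (_ : 8 * 0 + 2 + N = N.+2); last lia.
  apply: wpS_jlt => //; case: ifP => [h|_]; first ctr.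
  apply: wpS_jeq => //; rewrite eqxx.
  apply: K; first exact: frame_refl.
  split => //; first lia.
  by move=> l hl1 hl2; apply: hR' => //; lia.
case: (ltnP (v 10) (v 11)) => hlt; last first.
  apply: (wpS_mono (N := N.+2)); first lia.
  apply: wpS_jlt => //; case: ifP => [h|_]; first ctr.
  apply: wpS_jeq => //; rewrite eqxx.
  apply: K; first exact: frame_refl.
  split => //; first lia.
  by move=> l hl1 hl2; apply: hR' => //; lia.
case: hC => h0 h2 h3 h4 h5.
have e2 : 2 ^ r.+1 = 2 * 2 ^ r by rewrite expnS.
rewrite (_ : 8 * r.+1 + 2 + N = (8 * r + 2 + N).+4.+4); last lia.
apply: wpS_jlt => //; rewrite hlt.
apply: wpS_add => //=; first lia.
apply: wpS_div => //=; rewrite h4.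
set mid := (v 10 + v 11) %/ 2.
have hmid : v 10 <= mid < v 11 by rewrite /mid; lia.
apply: wpS_add => //=; first lia.
have htm : nth 0 ts mid < n by apply: hts; lia.
apply: (wpS_load (l := mid)) => //=; try lia.
apply: wpS_jltin => //=; try lia.
case: ifP => hcmp.
- apply: wpS_add => //=; first lia.
  apply: wpS_jeq => //=; rewrite eqxx.
  apply: IH => //=; try lia.
  rewrite h3 => l hl; case: (ltnP l (v 10)) => hl2; first exact: hL.
  case: (ltnP l mid) => hl3.
    by apply: lt_trans (hsort _ _ hl3 _) hcmp; lia.
  have -> : l = mid by lia.
  exact: hcmp.
- apply: wpS_add => //=; first lia.
  apply: wpS_jeq => //=; rewrite eqxx.
  apply: IH => //=; try lia.
  move=> l hl1 hl2; case: (ltnP mid l) => hl3.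
    rewrite -leNgt; apply: ltW; apply: le_lt_trans (hsort _ _ hl3 hl2).
    by rewrite leNgt hcmp.
  have -> : l = mid by lia.
  by rewrite hcmp.
Qed.




Definition Stail := [:: 0; 1; 2; 3; 4; 5; 6; 7] ++ [:: 15].

Lemma pass_tail u ts o N Q c j : Cst u -> u 8 = j -> j < n -> u 9 = size ts -> u 10 = c ->
  c <= size ts -> c < lis sg ->
  (forall u', frame Stail u u' -> u' 8 = j.+1 -> u' 9 = maxn c.+1 (size ts) ->
     wpS 8 u' (set_nth 0 ts c j) o N Q) ->
  wpS 30 u ts o (6 + N) Q.
Proof.
have hR := hR0; have hln := lis_le_n sg.
case => h0 h2 h3 h4 h5 h8 hj h9 h10 hc hcl K.
rewrite (_ : 6 + N = N.+4.+2); last lia.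
apply: wpS_add => //=; first lia.
apply: (wpS_store (l := c)) => //=; try lia.
rewrite h8.
apply: wpS_jlt => //=; rewrite h10 h9; case: ifP => hlt.
- apply: (wpS_mono (N := N.+2)); first lia.
  apply: wpS_add => //=; first lia.
  apply: wpS_jeq => //=; rewrite eqxx.
  apply: K; first by rewrite /frame /= !eqxx.
    by rewrite /= h8 h3 addn1.
  by rewrite /= h9; lia.
- apply: wpS_add => //=; first lia.
  apply: wpS_add => //=; first lia.
  apply: wpS_jeq => //=; rewrite eqxx.
  apply: K; first by rewrite /frame /= !eqxx.
    by rewrite /= h8 h3 addn1.
  by rewrite /= h9 h3; lia.
Qed.


Definition Match m b j := [/\ j < b, (exists c, Lis_at sg j c /\ c.+1 = m) &
  (b = n \/ (b < n /\ (vl sg j < vl sg b)%R))].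

Definition PassInv (v : nat -> nat) ts := [/\ Cst v, v 8 <= v 7 <= n, v 9 = size ts,
  PInv sg (v 8) ts &
  (exists2 j', j' < v 8 & Match (v 6) (v 7) j') -> Match (v 6) (v 7) (v 15)].

Definition Spass := [:: 0; 1; 2; 3; 4; 5; 6; 7].
Definition LG := lg n.
Definition XP := 8 * LG + 30.

Lemma pass_loop d : forall v ts o N Q, PassInv v ts -> v 7 - v 8 = d ->
  (forall v' ts', frame Spass v v' -> PassInv v' ts' -> v' 8 = v' 7 -> wpS 36 v' ts' o N Q) ->
  wpS 8 v ts o (d * XP + 2 + N) Q.
Proof.
have hR := hR0; have hln := lis_le_n sg.
have hLG : n < 2 ^ LG by apply: trunc_log_ltn.
elim: d => [|d IH] v ts o N Q [hC hjb h9 hP hF] hd K.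
  case: (hC) => h0 h2 h3 h4 h5.
  rewrite (_ : 0 * XP + 2 + N = N.+2); last lia.
  apply: wpS_jlt => //; case: ifP => [h|_]; first ctr.
  apply: wpS_jeq => //; rewrite eqxx.
  apply: K; first exact: frame_refl.
    by split.
  lia.
case: (hC) => h0 h2 h3 h4 h5.
have hsz := pinv_size hP.
have hjn : v 8 < n by lia.
apply: (wpS_mono (N := (8 * LG + 2 + (11 + (d * XP + 2 + N))).+3)).
  rewrite /XP mulSn; lia.
apply: wpS_jlt => //; case: ifP => [_|h]; last ctr.
apply: wpS_add => //=; first lia.
apply: wpS_add => //=; first lia.
apply: bs_loop => //=; try lia.
- by move=> l hl; have [_ h1 _ _ _] := hP; have := h1 l hl; lia.
- by case: hP.
move=> v' hf hs; have {}hf : frame Sbs v v' by [].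
have e0 := frameE hf (isT : 0 \in Sbs).
have e2 := frameE hf (isT : 2 \in Sbs).
have e3 := frameE hf (isT : 3 \in Sbs).
have e4 := frameE hf (isT : 4 \in Sbs).
have e5 := frameE hf (isT : 5 \in Sbs).
have e6 := frameE hf (isT : 6 \in Sbs).
have e7 := frameE hf (isT : 7 \in Sbs).
have e8 := frameE hf (isT : 8 \in Sbs).
have e9 := frameE hf (isT : 9 \in Sbs).
have e15 := frameE hf (isT : 15 \in Sbs).
set c := v' 10.
have [hP' hLis] := pat_step hP hjn hs.
have hsz' := pinv_size hP'.
rewrite size_set_nth in hsz'.
have hcs : c <= size ts by case: hs.
have hcl : c < lis sg by lia.
have e1 := frameE hf (isT : 1 \in Sbs).
have fvv' : frame Spass v v' by rewrite /frame /= e0 e1 e2 e3 e4 e5 e6 e7 !eqxx.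
have tail : forall u, frame Spass v u -> Cst u -> u 8 = v 8 -> u 9 = size ts -> u 10 = c ->
   ((exists2 j', j' < (v 8).+1 & Match (v 6) (v 7) j') -> Match (v 6) (v 7) (u 15)) ->
   wpS 30 u ts o (6 + (d * XP + 2 + N)) Q.
  move=> u fu hCu hu8 hu9 hu10 hFu.
  apply: (pass_tail (c := c) (j := v 8)) => // u' fu' hu'8 hu'9.
  have fpu' : frame Spass u u' by move: fu'; rewrite /Stail /frame all_cat => /andP[].
  have fvu' := frame_trans fu fpu'.
  have e15' : u' 15 = u 15 by apply: (frameE fu').
  have f i : i \in Spass -> u' i = v i by move=> hi; exact: frameE fvu' hi.
  apply: IH.
  - split.
    + by rewrite /Cst !f.
    + by rewrite hu'8 f //; lia.
    + by rewrite hu'9 size_set_nth.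
    + by rewrite hu'8.
    + by rewrite hu'8 (f 6) // (f 7) // e15'.
  - by rewrite hu'8 f //; lia.
  - move=> v'' ts'' fv'' hPI h87; apply: K => //; exact: frame_trans fvu' fv''.
have hnm : ~ Match (v 6) (v 7) (v 8) -> (exists2 j', j' < (v 8).+1 & Match (v 6) (v 7) j') ->
    Match (v 6) (v 7) (v 15).
  move=> hn [j' hj' hm]; apply: hF; exists j' => //.
  case: (ltnP j' (v 8)) => // hge; have ej : j' = v 8 by lia.
  by subst j'.
have hmatch : forall c', Lis_at sg (v 8) c' -> c' = c.
  by move=> c' hc'; apply: Lis_at_uniq hc' hLis.
rewrite (_ : 11 + (d * XP + 2 + N) = (6 + (d * XP + 2 + N)).+4.+1); last lia.
apply: wpS_add => //=; first lia.
apply: wpS_jeq => //=; rewrite e3 e6; case: ifP => hm.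
- move/eqP: hm => hm.
  apply: wpS_jeq => //=; rewrite e7 e0 h0; case: ifP => hbn.
  + apply: (wpS_mono (N := (6 + (d * XP + 2 + N)).+2)); first lia.
    apply: wpS_add => //=; first lia.
    apply: (wpS_mono (N := (6 + (d * XP + 2 + N)))); first lia.
    apply: tail => //=; rewrite ?e8 ?e9 ?e2 ?addn0 //; first by rewrite /Cst /= e0 e2 e3 e4 e5.
    move/eqP: hbn => hbn; rewrite h2 addn0.
    move=> _; split; [lia | exists c; split => //; lia | left; lia].
  + apply: wpS_jltin => //=; rewrite ?e8 ?e7; try lia.
    case: ifP => hlt.
    * apply: wpS_add => //=; first lia.
      apply: (wpS_mono (N := (6 + (d * XP + 2 + N)))); first lia.
      apply: tail => //=; rewrite ?e8 ?e9 ?e2 ?addn0 //; first by rewrite /Cst /= e0 e2 e3 e4 e5.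
      rewrite h2 addn0.
      move=> _; split; [lia | exists c; split => //; lia | right; split => //; lia].
    * apply: wpS_jeq => //=; rewrite eqxx.
      apply: tail => //=; rewrite ?e8 ?e9 ?e15 //; first by rewrite /Cst /= e0 e2 e3 e4 e5.
      apply: hnm => -[_ [c' [hc' hc'm]] [hb|[_ hb]]]; first lia.
      by rewrite hb in hlt.
- apply: (wpS_mono (N := (6 + (d * XP + 2 + N)).+1)); first lia.
  apply: wpS_jeq => //=; rewrite eqxx.
  apply: tail => //=; rewrite ?e8 ?e9 ?e15 //; first by rewrite /Cst /= e0 e2 e3 e4 e5.
  apply: hnm => -[_ [c' [hc' hc'm]] _].
  have := hmatch _ hc'; rewrite /c => ec; subst c'.
  by move/negbT: hm; rewrite h3 addn1 hc'm eqxx.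
Qed.




Definition RInv (v : nat -> nat) (o : seq int) (ros : seq nat) :=
 [/\ Cst v, o = map Posz (rev ros), v 6 <= lis sg /\ size ros = lis sg - v 6,
    sorted (lt2 sg) ros /\ all (fun i => i < n) ros &
    (ros = [::] /\ v 7 = n /\ v 6 = lis sg) \/ (exists rest, ros = v 7 :: rest /\ Lis_at sg (v 7) (v 6))].

Definition Qf (c : config) := exists v ts, Sa 44 v ts (out c) c /\ is_lis_positions sg (rev (out c)).

Lemma outer_loop m : forall v ts o ros, v 6 = m -> RInv v o ros ->
  wpS 42 v ts o (m * (n * XP + 11) + 1) Qf.
Proof.
have hR := hR0; have hln := lis_le_n sg.
elim: m => [|m IH] v ts o ros hm [hC ho [hml hsz] [hso hal] hcase].
  case: (hC) => h0 h2 h3 h4 h5.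
  apply: wpS_jeq => //; rewrite hm h2 eqxx.
  move=> c hc; have [_ _ _ h4' hg] := hc.
  apply: wp_ret => //; exists v, ts; rewrite h4'; split => //.
  rewrite ho map_rev revK.
  move: hso; rewrite sorted_lt2 => /andP[hs1 hs2].
  split; first by apply/allP => x /mapP[y _ ->].
  have -> : [seq `|x|%N | x <- [seq Posz i | i <- ros]] = ros.
    by rewrite -map_comp map_id_in.
  split => //; lia.
case: (hC) => h0 h2 h3 h4 h5.
set Mi := m * (n * XP + 11) + 1.
apply: (wpS_mono (N := (v 7 * XP + 2 + Mi.+4.+1).+4)).
  have : v 7 <= n.
    case: hcase => [[_ [-> _]] //|[rest [_ [/chain_lt h _]]]]; lia.
  move=> h7; rewrite /Mi mulSn; nia.
apply: wpS_jeq => //; rewrite hm h2 /=.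
apply: wpS_jeq => //; rewrite eqxx.
apply: wpS_add => //=; first lia.
apply: wpS_add => //=; first lia.
apply: wpS_nil.
apply: pass_loop.
- split => //=.
  + rewrite h2; case: hcase => [[_ [-> _]] //|[rest [_ [/chain_lt h _]]]]; lia.
  + by rewrite h2.
  + by rewrite h2; exact: PInv0.
  + by rewrite h2 => -[].
- by rewrite /= h2 subn0.
move=> v' ts' fv' hPI he.
have {}fv' : frame Spass v v' by [].
have f i : i \in Spass -> v' i = v i by move=> hi; exact: frameE fv' hi.
have [hC' _ _ _ hF] := hPI.
have hmatch : Match (m.+1) (v 7) (v' 15).
  move: hF; rewrite he (f 6) // (f 7) // hm; apply.
  case: hcase => [[_ [hb hlis]]|[rest [hr hL]]].
    have [j hj] := Lis_at_top (ltac:(lia) : 0 < lis sg).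
    have hjn : j < n by case: hj => /chain_lt.
    exists j; first lia.
    split; [lia | exists (lis sg).-1; split => //; lia | by left].
  rewrite hm in hL; have [j [hj1 hj2 hj3]] := Lis_at_pred hL.
  exists j => //; split => //; first by exists m.
  by right; split => //; case: hL => /chain_lt.
case: (hC') => h0' h2' h3' h4' h5'.
apply: wpS_jeq => //; rewrite (f 6) // hm h2' /=.
apply: wpS_out => //.
have h7n : v 7 <= n.
  case: hcase => [[_ [-> _]] //|[rest [_ [/chain_lt h _]]]]; lia.
have [hf1 [c [hc1 hc2]] hf3] := hmatch.
apply: wpS_add => //=; first lia.
apply: wpS_sub => //=; first by rewrite h3' (f 6) // hm.
apply: wpS_jeq => //=; rewrite eqxx.
apply: (IH _ _ _ (v' 15 :: ros)) => /=.
  by rewrite (f 6) // hm h3' subn1.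
split.
- by rewrite /Cst /=.
- by rewrite ho rev_cons map_rcons.
- rewrite /= (f 6) // hm h3' subn1; lia.
- split.
  + case: hcase => [[hr _]|[rest [hr hL]]]; rewrite hr /=; first done.
    move: hso; rewrite hr /= => ->; rewrite andbT /lt2 /gr hf1 /=.
    case: hf3 => [hb|[_ //]]; case: hL => /chain_lt; lia.
  + rewrite /= hal andbT.
    case: hcase => [[_ [hb _]]|[rest [_ [/chain_lt h _]]]]; lia.
- right; exists ros; rewrite /= h2' addn0; split => //.
  rewrite (f 6) // hm h3' subn1; have -> : m = c by lia.
  exact: hc1.
Qed.


Definition Tprog := lis sg * (n * XP + 11) + n * XP + 13.

Lemma prog_ok s : s <= n -> wp (init_config n s) Tprog Qf.
Proof.
have hR := hR0; have hln := lis_le_n sg.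
move=> hs.
set v0 := fun i => nth 0 [:: n; s] i.
have hS : Sa 0 v0 [::] [::] (init_config n s).
  split => //.
  - by move=> i _; rewrite /rget /v0; case: i => [|[|i]] //=; rewrite !nth_nil.
  - rewrite /Good /= hLc hBv; apply/andP; split; first lia.
    by rewrite /= andbT; apply/andP; split; lia.
set big := (8 * 0 + ((n * XP + 2 + (lis sg * (n * XP + 11) + 1).+2)).+4.+4).
have hT : big <= Tprog by rewrite /big /Tprog; lia.
suff h : wpS 0 v0 [::] [::] big Qf by apply: wp_mono hT (h _ hS).
rewrite /big.
apply: (wpS_const (k := 0)) => //=; try (rewrite /v0 /=; lia).
apply: (wpS_const (k := 1)) => //=; try (rewrite /v0 /=; lia).
apply: (wpS_const (k := 2)) => //=; try (rewrite /v0 /=; lia).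
apply: (wpS_const (k := 17)) => //=; try (rewrite /v0 /=; lia).
apply: wpS_add => //=; try (rewrite /v0 /=; lia).
apply: wpS_add => //=; try (rewrite /v0 /=; lia).
apply: wpS_add => //=; try (rewrite /v0 /=; lia).
apply: wpS_add => //=; try (rewrite /v0 /=; lia).
apply: pass_loop => //=.
- split => //=; first by rewrite /v0 /= addn0.
  by case.
- by rewrite /v0 /= subn0 addn0.
move=> v' ts' /andP[/eqP e0 /andP[/eqP e1 /andP[/eqP e2 /andP[/eqP e3 /andP[/eqP e4 /andP[/eqP e5 /andP[/eqP e6 /andP[/eqP e7 _]]]]]]]] hPI he.
have [hC' hjb h9 hP _] := hPI.
rewrite /v0 /= addn0 in e0 e7 e6.
apply: wpS_jeq => //=; rewrite e6 e2 eqxx.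
apply: wpS_add => //=; first by have := pinv_size hP; have := lis_le_n sg; rewrite e2 h9 addn0; lia.
have hlis : lis sg = size ts' by apply: pinv_lis; rewrite he e7 in hP.
apply: (outer_loop (ros := [::])) => //=.
  by rewrite h9 e2 addn0.
split => //=.
- split; [by rewrite h9 e2 addn0 hlis | by rewrite h9 e2 addn0 hlis subnn].
- by left; rewrite h9 e2 addn0 hlis e7.
Qed.

Lemma space_good c : Good c -> space_cfg c <= Lc * (trunc_log 2 B).+2.
Proof.
rewrite /Good /space_cfg => /andP[hs ha].
suff h : \sum_(x <- regs c) (trunc_log 2 `|x|).+2 <= size (regs c) * (trunc_log 2 B).+2.
  by apply: leq_trans h _; rewrite leq_mul2r hs orbT.
elim: (regs c) ha => [|x r IH] /=.
  by rewrite big_nil.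
move=> /andP[hx ha]; rewrite big_cons.
have := IH ha; have := leq_trunc_log 2 hx; rewrite mulSn; lia.
Qed.

End Machine.

Lemma exS p sg w st t : exec p sg w st t.+1 = step_state p sg w (exec p sg w st t).
Proof. by rewrite /exec iterS. Qed.

Lemma tlog_bound n : trunc_log 2 (2 * n + 40) <= lg n + 5.
Proof.
have h1 : n < 2 ^ lg n by apply: trunc_log_ltn.
have h2 : 2 * n + 40 < 2 ^ (lg n + 6) by rewrite expnD; lia.
have h3 := @trunc_logP 2 (2 * n + 40) isT (ltac:(lia)).
have : 2 ^ trunc_log 2 (2 * n + 40) < 2 ^ (lg n + 6) by apply: leq_ltn_trans h3 h2.
rewrite ltn_exp2l //; lia.
Qed.

Lemma wbound n : 2 * n + 40 < 2 ^ (8 * lg n).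
Proof.
have h1 : n < 2 ^ lg n by apply: trunc_log_ltn.
have hL : 1 <= lg n by [].
have h2 : 2 ^ 7 <= 2 ^ (7 * lg n) by rewrite leq_exp2l //; lia.
have -> : 8 * lg n = lg n + 7 * lg n by lia.
rewrite expnD; nia.
Qed.

Theorem corollary13 :
  forall c0 : nat,
  exists (p : program) (K C : nat),
  forall (n s : nat) (sigma : seq int),
    size sigma = n ->
    (n <= s * s)%N -> (s <= n)%N ->
    (lis sigma * s <= c0 * n)%N ->
    exists T S : nat,
      (T * s <= C * (n ^ 2 * lg n) + C * s)%N /\
      (S <= C * (s * lg n) + C)%N /\
      finds_lis_within p (K * lg n) sigma s T S.
Proof.
move=> c0; exists prog, 8, (60 * c0 + 300) => n s sg hn hss hsn hlis.
subst n.
have hBw := wbound (size sg).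
have hRL : R0 <= R0 + lis sg by apply: leq_addr.
have hln := lis_le_n sg.
have hL : 1 <= lg (size sg) by [].
exists (Tprog sg).+1, ((R0 + lis sg) * (trunc_log 2 (2 * size sg + 40)).+2).
split; last split.
- rewrite /Tprog /XP /LG.
  set L := lg (size sg); set n := size sg.
  set X := n * (8 * L + 30) + 11.
  have e : (lis sg * X + n * (8 * L + 30) + 13).+1 * s =
           (lis sg * s) * X + n * (8 * L + 30) * s + 14 * s by ring.
  rewrite e {e}.
  have h1 : (lis sg * s) * X <= (c0 * n) * X by rewrite leq_mul2r hlis orbT.
  have h2 : n * (8 * L + 30) * s <= n * (8 * L + 30) * n by rewrite leq_mul2l hsn orbT.
  have h3 : n * n <= n * n * L by rewrite leq_pmulr.
  have h4 : n <= n * n * L.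
    case: (posnP n) => [->|hp] //; apply: leq_trans h3; by rewrite leq_pmulr.
  have h5 : c0 * (n * n) <= c0 * (n * n * L) by rewrite leq_mul2l h3 orbT.
  have h6 : c0 * n <= c0 * (n * n * L) by rewrite leq_mul2l h4 orbT.
  have e2 : (c0 * n) * X = 8 * (c0 * (n * n * L)) + 30 * (c0 * (n * n)) + 11 * (c0 * n) by rewrite /X; ring.
  have e3 : n * (8 * L + 30) * n = 8 * (n * n * L) + 30 * (n * n) by ring.
  have e4 : (60 * c0 + 300) * (n ^ 2 * L) + (60 * c0 + 300) * s =
     60 * (c0 * (n * n * L)) + 300 * (n * n * L) + (60 * c0 + 300) * s by ring.
  rewrite e4; rewrite e2 in h1; rewrite e3 in h2.
  move: h1 h2 h3 h4 h5 h6.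
  set A := c0 * (n * n * L); set A2 := c0 * (n * n); set A3 := c0 * n.
  set Y := n * n * L; set Y2 := n * n; set P := lis sg * s * X; set Q := n * (8 * L + 30) * s.
  have : s <= (60 * c0 + 300) * s by rewrite leq_pmull // addn_gt0 orbT.
  lia.
- have htb := tlog_bound (size sg).
  set L := lg (size sg) in hL htb *; set n := size sg in hss hsn hlis hln htb *.
  have hS1 : (R0 + lis sg) * (trunc_log 2 (2 * n + 40)).+2 <= (17 + lis sg) * (L + 7).
    by apply: leq_mul; [rewrite hR0 | lia].
  apply: leq_trans hS1 _.
  case: (posnP s) => [s0|spos].
    have n0 : n = 0 by move: hss; rewrite s0; lia.
    have l0 : lis sg = 0 by lia.
    have L1 : L = 1 by rewrite /L; move: n0; rewrite /n => ->.
    by rewrite l0 L1 s0; lia.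
  have hls : lis sg <= c0 * s.
    rewrite -(leq_pmul2r spos); apply: leq_trans hlis _; rewrite -mulnA leq_mul2l.
    by rewrite hss orbT.
  have h1 : (17 + lis sg) * (L + 7) <= (17 + c0 * s) * (L + 7) by rewrite leq_mul2r leq_add2l hls orbT.
  apply: leq_trans h1 _.
  have e1 : (17 + c0 * s) * (L + 7) = 17 * L + 119 + c0 * (s * L) + 7 * (c0 * s) by ring.
  have e2 : (60 * c0 + 300) * (s * L) + (60 * c0 + 300) = 60 * (c0 * (s * L)) + 300 * (s * L) + 60 * c0 + 300 by ring.
  rewrite e1 e2.
  have h2 : L <= s * L by rewrite leq_pmull.
  have h3 : c0 * s <= c0 * (s * L) by rewrite leq_mul2l leq_pmulr ?orbT.
  move: h2 h3; set A := c0 * (s * L); set B := s * L; set D := c0 * s.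
  lia.
have [t [c [ht [[he hsp] [v [ts [hS hout]]]]]]] := prog_ok hBw hRL erefl erefl hsn.
have hhalt : exec prog sg (8 * lg (size sg)) (Running (init_config (size sg) s)) t.+1 = Halted c.
  by rewrite exS; move: he; rewrite /ex => ->; rewrite /= (Sa_halt _ _ hS).
exists t.+1, c; split; first by rewrite ltnS.
split => //; split; first by right.
move=> t' ht'; case: (ltnP t t') => h.
  have -> : t' = t.+1 by lia.
  rewrite hhalt /=; apply: (space_good hBw hRL erefl erefl).
  by case: hS.
have [c'' [e'' g'']] := hsp t' h.
move: e''; rewrite /ex => ->; rewrite /=.
exact: (space_good hBw hRL erefl erefl).
Qed.
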